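(* Let $E_1,E_2$ be vector spaces of the same finite dimension $n$ over a field $\mathbb{K}$, and let $\mathsf{P}(E_i)$ be the lattice of all subspaces of $E_i$. Then there is an injective map from the set $\mathbb{P}(E_1\otimes E_2)$ of one-dimensional subspaces of $E_1\otimes E_2$ to the set of atoms of $\mathsf{P}(E_1)\multimap\mathsf{P}(E_2):=(\mathsf{P}(E_1)\circledast\mathsf{P}(E_2)^{\mathrm{op}})^{\mathrm{op}}$.
   Context: Lattice notation: $\Sigma_i,\Sigma_i'$ atoms and coatoms; $\Sigma[a]$ atoms below $a$; $\mathsf{Cl}(\omega)=\{\Sigma[a];a\in\omega\}$; $\mathcal{L}^{\mathrm{op}}$ dual lattice. For complete atomistic coatomistic lattices $\mathcal{L}_1,\mathcal{L}_2$: $\Sigma'_\circledast$ is the set of $R\subsetneqq\Sigma_1\times\Sigma_2$ such that for all $(p_1,p_2)$, $\{q_1;(q_1,p_2)\in R\}\in\mathsf{Cl}(\Sigma_1'\cup\{1\})$ and $\{q_2;(p_1,q_2)\in R\}\in\mathsf{Cl}(\Sigma_2'\cup\{1\})$, and $\mathcal{L}_1\circledast\mathcal{L}_2:=\{\bigcap\omega;\omega\subseteq\Sigma'_\circledast\cup\{\Sigma_1\times\Sigma_2\}\}$ ordered by inclusion. *)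

(* Defs.v *)
From HB Require Import structures.
From mathcomp Require Import all_boot all_order all_algebra.
Set Implicit Arguments. Unset Strict Implicit. Unset Printing Implicit Defensive.
Import GRing.Theory.
Local Open Scope ring_scope.

(* Posets are given by a carrier predicate C and an order relation le. *)
Definition op_rel {A : Type} (le : A -> A -> Prop) : A -> A -> Prop :=
  fun x y => le y x.

Definition atomC {A : Type} (C : A -> Prop) (le : A -> A -> Prop) (a : A) : Prop :=
  C a /\ ~ (forall y, C y -> le a y) /\
  forall x, C x -> le x a -> ~ le a x -> forall y, C y -> le x y.

Definition atom {A : Type} (le : A -> A -> Prop) (a : A) : Prop :=
  atomC (fun _ => True) le a.
Definition coatom {A : Type} (le : A -> A -> Prop) (a : A) : Prop :=
  atom (op_rel le) a.
Definition is_top {A : Type} (le : A -> A -> Prop) (t : A) : Prop :=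
  forall x, le x t.

Definition below {A : Type} (le : A -> A -> Prop) (a : A) : A -> Prop :=
  fun p => atom le p /\ le p a.

Definition in_Cl_coatom_top {A : Type} (le : A -> A -> Prop) (S : A -> Prop) : Prop :=
  exists a, (coatom le a \/ is_top le a) /\ forall q, S q <-> below le a q.

Definition SigmaProd {A1 A2 : Type} (le1 : A1 -> A1 -> Prop) (le2 : A2 -> A2 -> Prop)
  : A1 * A2 -> Prop := fun x => atom le1 x.1 /\ atom le2 x.2.

Definition subsetP {A : Type} (X Y : A -> Prop) : Prop := forall x, X x -> Y x.

Definition SigmaAst' {A1 A2 : Type} (le1 : A1 -> A1 -> Prop) (le2 : A2 -> A2 -> Prop)
  (R : A1 * A2 -> Prop) : Prop :=
  subsetP R (SigmaProd le1 le2) /\ R <> SigmaProd le1 le2 /\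
  forall p1 p2, atom le1 p1 -> atom le2 p2 ->
    in_Cl_coatom_top le1 (fun q1 => R (q1, p2)) /\
    in_Cl_coatom_top le2 (fun q2 => R (p1, q2)).

(* elements of L1 (circledast) L2 : intersections of subfamilies of
   Sigma'_circledast \cup {Sigma1 x Sigma2}, ordered by inclusion
   (the empty intersection being Sigma1 x Sigma2). *)
Definition tensor_elt {A1 A2 : Type} (le1 : A1 -> A1 -> Prop) (le2 : A2 -> A2 -> Prop)
  (X : A1 * A2 -> Prop) : Prop :=
  exists omega : (A1 * A2 -> Prop) -> Prop,
    (forall R, omega R -> SigmaAst' le1 le2 R \/ R = SigmaProd le1 le2) /\
    X = (fun x => SigmaProd le1 le2 x /\ forall R, omega R -> R x).

(* atoms of L1 -o L2 := (L1 (circledast) L2^op)^op *)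
Definition multimap_atom {A1 A2 : Type} (le1 : A1 -> A1 -> Prop) (le2 : A2 -> A2 -> Prop)
  (X : A1 * A2 -> Prop) : Prop :=
  atomC (tensor_elt le1 (op_rel le2)) (op_rel subsetP) X.

Definition subspace_le {K : fieldType} {E : vectType K} (U V : {vspace E}) : Prop :=
  (U <= V)%VS.

(* Tensor product E1 (x) E2, modelled (basis-free) as Hom(E1^*, E2). *)
Definition tensorV (K : fieldType) (E1 E2 : vectType K) : vectType K :=
  'Hom('Hom(E1, K^o), E2).

(* Main.v *)
Require Import Defs.
From HB Require Import structures.
From mathcomp Require Import all_boot all_order all_algebra.
From Stdlib Require Import Classical FunctionalExtensionality PropExtensionality.
Set Implicit Arguments. Unset Strict Implicit. Unset Printing Implicit Defensive.
Import GRing.Theory.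
Local Open Scope ring_scope.

Section Gen.
Variable K : fieldType.

Notation hyp V a := (atom (op_rel (@subspace_le K V)) a).

Lemma atom_line (V : vectType K) (p : {vspace V}) :
  atom (@subspace_le K V) p -> exists2 u, u != 0 & p = <[u]>%VS.
Proof.
move=> [_ [Hne Hmin]].
have p0 : p != 0%VS.
  apply/negP => /eqP p0; apply: Hne => y _; rewrite /subspace_le p0 sub0v //.
exists (vpick p); first by rewrite vpick0.
have sub1 : (<[vpick p]> <= p)%VS by rewrite -memvE memv_pick.
case: (boolP (p <= <[vpick p]>)%VS) => H.
  by apply/eqP; rewrite eqEsubv H sub1.
exfalso; have := Hmin _ I sub1 (fun h => negP H h) 0%VS I.
rewrite /subspace_le -memvE memv0 vpick0 => /eqP p00.
by move/eqP: p0.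
Qed.

Lemma line_atom (V : vectType K) (u : V) : u != 0 -> atom (@subspace_le K V) <[u]>%VS.
Proof.
move=> u0; split => //; split.
  move=> /(_ 0%VS I); rewrite /subspace_le -memvE memv0.
  by rewrite (negPf u0).
move=> x _ xu nux y _; apply/subvP => z zx.
have /vlineP [k zk] : z \in <[u]>%VS by apply: (subvP xu).
case: (eqVneq k 0) => k0.
  by rewrite zk k0 scale0r mem0v.
exfalso; apply: nux; rewrite /subspace_le -memvE.
have -> : u = k^-1 *: z by rewrite zk scalerA mulVf // scale1r.
by rewrite memvZ.
Qed.

Lemma hyp_add (V : vectType K) (H : {vspace V}) v :
  hyp V H -> v \notin H -> forall w, w \in (H + <[v]>)%VS.
Proof.
move=> [_ [_ Hmax]] vH w.
have := Hmax (H + <[v]>)%VS I (addvSl _ _).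
move=> /(_ _ fullv I) h.
have: (fullv <= H + <[v]>)%VS.
  apply: h; rewrite /op_rel /subspace_le => hs.
  by move: vH; rewrite (subvP hs) //; apply: (subvP (addvSr _ _)); apply: memv_line.
by move=> /subvP; apply; apply: memvf.
Qed.

Lemma sep (V : vectType K) (W : {vspace V}) v :
  v \notin W -> exists H, hyp V H /\ (W <= H)%VS /\ v \notin H.
Proof.
move=> vW; set C := ((W + <[v]>)^C)%VS.
have vH : v \notin (W + C)%VS.
  apply/negP => /memv_addP [w wW [c cC vwc]].
  have : c \in ((W + <[v]>) :&: C)%VS.
    rewrite memv_cap cC andbT.
    have -> : c = v - w by rewrite vwc addrC addKr.
    apply: memvB; first by apply: (subvP (addvSr _ _)); apply: memv_line.
    by apply: (subvP (addvSl _ _)).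
  rewrite capv_compl memv0 => /eqP c0.
  by move: vW; rewrite vwc c0 addr0 wW.
exists (W + C)%VS; split; last by split; [apply: addvSl|].
split => //; split.
  by move=> /(_ fullv I); rewrite /op_rel /subspace_le => /subvP /(_ v (memvf v)); apply/negP.
move=> x _; rewrite /op_rel /subspace_le => Hx nxH y _.
have /subvPn [z zx zH] : ~~ (x <= W + C)%VS by apply/negP.
apply: (subv_trans (subvf _)).
have : z \in (W + <[v]> + C)%VS by rewrite addv_complf memvf.
move=> /memv_addP [a /memv_addP [w wW [b /vlineP [k bk] ->]] [c cC zE]].
have Wx : (W <= x)%VS by apply: subv_trans Hx; apply: addvSl.
have Cx : (C <= x)%VS by apply: subv_trans Hx; apply: addvSr.
case: (eqVneq k 0) => k0.
  by move: zH; rewrite zE bk k0 scale0r addr0 memv_add.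
have vx : v \in x.
  have -> : v = k^-1 *: (z - w - c) by rewrite zE bk addrAC addrK addrC addKr scalerA mulVf // scale1r.
  apply: memvZ; apply: memvB; [apply: memvB|]; by [|apply: (subvP Wx)|apply: (subvP Cx)].
by rewrite -(addv_complf (W + <[v]>)) -/C !subv_add Wx Cx -memvE vx.
Qed.

Lemma avoid2 (V : vectType K) (x y : V) :
  y != 0 -> x \notin <[y]>%VS -> exists H, hyp V H /\ y \notin H /\ x \notin H.
Proof.
move=> y0 xy.
have ynot : y \notin <[x - y]>%VS.
  apply/negP => /vlineP [k yk].
  case: (eqVneq k 0) => k0; first by move: y0; rewrite yk k0 scale0r eqxx.
  have e : k *: x = y + k *: y by rewrite {1}yk scalerBr subrK.
  move: xy; have -> : x = k^-1 *: (y + k *: y) by rewrite -e scalerA mulVf // scale1r.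
  by rewrite memvZ // memvD // ?memvZ // memv_line.
have [H [hH [sH yH]]] := sep ynot.
exists H; split => //; split => //.
apply/negP => xH; move: yH.
have -> : y = x - (x - y) by rewrite opprB addrC subrK.
by rewrite memvB // (subvP sH) // memv_line.
Qed.

Lemma indep (V : vectType K) (x y : V) (a b : K) :
  y != 0 -> x \notin <[y]>%VS -> a *: x + b *: y = 0 -> a = 0 /\ b = 0.
Proof.
move=> y0 xy e.
have a0 : a = 0.
  apply/eqP; apply/negP => /negP a0; move: xy.
  have ax : a *: x = - (b *: y) by apply/eqP; rewrite -subr_eq0 opprK e.
  have -> : x = a^-1 *: (- (b *: y)) by rewrite -ax scalerA mulVf // scale1r.
  by rewrite memvZ // memvN memvZ // memv_line.
split => //; move: e; rewrite a0 scale0r add0r => /eqP; rewrite scaler_eq0 (negPf y0) orbF.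
by move/eqP.
Qed.
End Gen.
Section Rel.
Variables (K : fieldType) (E1 E2 : vectType K).
Notation le1 := (@subspace_le K E1).
Notation le2 := (@subspace_le K E2).
Notation hyp V a := (atom (op_rel (@subspace_le K V)) a).

Definition Rg (g : 'Hom(E1, E2)) : {vspace E1} * {vspace E2} -> Prop :=
  fun x => atom le1 x.1 /\ hyp E2 x.2 /\ (g @: x.1 <= x.2)%VS.

Lemma Rg_line g u q : u != 0 -> (Rg g (<[u]>%VS, q) <-> hyp E2 q /\ g u \in q).
Proof.
move=> u0; rewrite /Rg /= limg_line -memvE; split; first by case.
by move=> [h1 h2]; split => //; apply: line_atom.
Qed.

Lemma Rg_sub g : Defs.subsetP (Rg g) (SigmaProd le1 (op_rel le2)).
Proof. by move=> x [a [b _]]. Qed.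

Lemma Rg_ne g : g != 0 -> Rg g <> SigmaProd le1 (op_rel le2).
Proof.
move=> /lfunPn [u]; rewrite zero_lfunE => gu0.
have u0 : u != 0 by apply: contraNneq gu0 => ->; rewrite linear0.
have gn : g u \notin (0%VS : {vspace E2}) by rewrite memv0.
have [H [hH [_ guH]]] := sep gn.
move=> E.
have : SigmaProd le1 (op_rel le2) (<[u]>%VS, H) by split => //; apply: line_atom.
by rewrite -E => /(Rg_line _ _ u0) [_ h]; move: guH; rewrite h.
Qed.

Lemma Rg_Sigma g : g != 0 -> SigmaAst' le1 (op_rel le2) (Rg g).
Proof.
move=> g0; split; first exact: Rg_sub.
split; first exact: Rg_ne.
move=> p1 p2 ap1 hp2; split.
- exists (g @^-1: p2)%VS; split.
    case: (boolP (fullv <= g @^-1: p2)%VS) => hf.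
      by right => x; apply: subv_trans hf; apply: subvf.
    left; split => //; split.
      by move=> /(_ fullv I); rewrite /op_rel /subspace_le (negPf hf).
    move=> x _; rewrite /op_rel /subspace_le => bx nxb y _.
    have /subvPn [z zx zb] : ~~ (x <= g @^-1: p2)%VS by apply/negP.
    apply: (subv_trans (subvf _)); apply/subvP => w _.
    have gz : g z \notin p2 by rewrite memv_preim.
    have /memv_addP [h hp [b /vlineP [k bk] gw]] := hyp_add hp2 gz (g w).
    have : w - k *: z \in x.
      by apply: (subvP bx); rewrite -memv_preim linearB linearZ /= gw bk addrK.
    move=> wx; have -> : w = (w - k *: z) + k *: z by rewrite subrK.
    by rewrite memvD // memvZ.
  move=> q; split.
    move=> [/= aq [_ /= gq]]; split => //.
    have [u u0 qE] := atom_line aq; rewrite qE in gq *.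
    by rewrite /subspace_le -memvE -memv_preim memvE -limg_line.
  move=> [aq qb]; split => //; split => //=.
  have [u u0 qE] := atom_line aq; rewrite /subspace_le qE in qb *.
  by rewrite limg_line -memvE memv_preim memvE.
- have [u u0 pE] := atom_line ap1; rewrite pE.
  exists <[g u]>%VS; split.
    case: (eqVneq (g u) 0) => gu0.
      by right => x; rewrite /op_rel /subspace_le gu0 -memvE mem0v.
    by left; apply: line_atom.
  move=> q; rewrite (Rg_line _ _ u0) /below /op_rel /subspace_le -memvE.
  by split.
Qed.
End Rel.
Section Key.
Variables (K : fieldType) (E1 E2 : vectType K).
Notation le1 := (@subspace_le K E1).
Notation le2 := (@subspace_le K E2).
Notation hyp V a := (atom (op_rel (@subspace_le K V)) a).

Lemma key (g : 'Hom(E1, E2)) R x0 : SigmaAst' le1 (op_rel le2) R ->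
  Defs.subsetP (Rg g) R -> R x0 -> ~ Rg g x0 -> False.
Proof.
move=> [Rsub [Rne Rcl]] gR.
case: x0 => U0 H0 Rx0 nRg.
have [/= aU0 hH0] := Rsub _ Rx0.
have [u0 u00 U0E] := atom_line aU0.
have gH0 : g u0 \notin H0.
  apply/negP => h; apply: nRg; rewrite U0E; apply/(Rg_line _ _ u00); by split.
have g0 : g u0 != 0 by apply: contraNneq gH0 => ->; rewrite mem0v.
have step1 : forall q, hyp E2 q -> R (<[u0]>%VS, q).
  move=> q hq.
  have [_ [a [_ aE]]] := Rcl _ _ aU0 hH0.
  rewrite -U0E; apply/aE; split => //; rewrite /op_rel /subspace_le.
  apply/subvP => z za.
  have zH0 : z \in H0 by have [_ /subvP] := (aE H0).1 Rx0; apply.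
  case: (boolP (z \in <[g u0]>%VS)) => zg.
    move/vlineP: zg => [k zk]; case: (eqVneq k 0) => k0.
      by rewrite zk k0 scale0r mem0v.
    exfalso; move: gH0; have -> : g u0 = k^-1 *: z by rewrite zk scalerA mulVf // scale1r.
    by rewrite memvZ.
  exfalso; have [H [hH [sH zH]]] := sep zg.
  have RH : R (U0, H).
    apply: gR; rewrite U0E; apply/(Rg_line _ _ u00); split => //.
  by have [_ /subvP /(_ _ za)] := (aE H).1 RH; rewrite (negPf zH).
have step2 : forall q, hyp E2 q -> g u0 \notin q -> forall p, atom le1 p -> R (p, q).
  move=> q hq gq p ap.
  have [[b [_ bE]] _] := Rcl _ _ aU0 hq.
  apply/bE; split => //; apply: subv_trans (subvf _) _.
  have u0b : u0 \in b.
    have [_ h] := (bE U0).1 (ltac:(rewrite U0E; exact: step1 q hq)).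
    by rewrite memvE -U0E.
  apply/subvP => w _.
  have /memv_addP [h hq' [c /vlineP [k ck] gw]] := hyp_add hq gq (g w).
  have wb : w - k *: u0 \in b.
    case: (eqVneq (w - k *: u0) 0) => [->|wn]; first by rewrite mem0v.
    have : R (<[w - k *: u0]>%VS, q).
      apply: gR; apply/(Rg_line _ _ wn); split => //.
      by rewrite linearB linearZ /= gw ck addrK.
    by move=> /bE [_]; rewrite /subspace_le -memvE.
  have -> : w = (w - k *: u0) + k *: u0 by rewrite subrK.
  by rewrite memvD // memvZ.
have step3 : forall p q, atom le1 p -> hyp E2 q -> R (p, q).
  move=> p q ap hq.
  have [_ [a [_ aE]]] := Rcl _ _ ap hH0.
  apply/aE; split => //; rewrite /op_rel /subspace_le; apply/subvP => z za.
  have zH0 : z \in H0 by have [_ /subvP] := (aE H0).1 (step2 _ hH0 gH0 _ ap); apply.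
  case: (boolP (z \in <[g u0]>%VS)) => zg.
    move/vlineP: zg => [k zk]; case: (eqVneq k 0) => k0.
      by rewrite zk k0 scale0r mem0v.
    exfalso; move: gH0; have -> : g u0 = k^-1 *: z by rewrite zk scalerA mulVf // scale1r.
    by rewrite memvZ.
  exfalso; have [H [hH [gH zH]]] := avoid2 g0 zg.
  by have [_ /subvP /(_ _ za)] := (aE H).1 (step2 _ hH gH _ ap); rewrite (negPf zH).
apply: Rne; apply: functional_extensionality => -[p q].
apply: propositional_extensionality; split; first exact: Rsub.
by move=> [ap hq]; apply: step3.
Qed.
End Key.
Section Propo.
Variables (K : fieldType) (E1 E2 : vectType K).

Lemma prop_line (g g' : 'Hom(E1, E2)) : Rg g = Rg g' -> forall u, g' u \in <[g u]>%VS.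
Proof.
move=> E u; case: (eqVneq u 0) => [->|u0]; first by rewrite linear0 mem0v.
case: (boolP (g' u \in <[g u]>%VS)) => // h; exfalso.
have [H [hH [sH nH]]] := sep h.
have : Rg g (<[u]>%VS, H) by apply/(Rg_line _ _ u0); split.
by rewrite E => /(Rg_line _ _ u0) [_]; rewrite (negPf nH).
Qed.

Lemma prop (g g' : 'Hom(E1, E2)) : g != 0 -> (forall u, g' u \in <[g u]>%VS) ->
  exists c, forall u, g' u = c *: g u.
Proof.
move=> /lfunPn [u0]; rewrite zero_lfunE => g0 hl.
have /vlineP [c hc] := hl u0.
exists c => u.
case: (boolP (g u \in <[g u0]>%VS)) => hu.
  move/vlineP: hu => [a ha].
  have h0 : g (u - a *: u0) = 0 by rewrite linearB linearZ /= ha subrr.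
  have := hl (u - a *: u0); rewrite h0 => /vlineP [k].
  rewrite scaler0 linearB linearZ /= => /eqP; rewrite subr_eq0 => /eqP ->.
  by rewrite hc ha !scalerA mulrC.
have /vlineP [l hl1] := hl (u + u0).
have /vlineP [m hm] := hl u.
have e1 : m *: g u + c *: g u0 = l *: g u + l *: g u0.
  by move: hl1; rewrite !linearD /= hm hc.
have e : (m - l) *: g u + (c - l) *: g u0 = 0.
  by rewrite !scalerBl addrACA e1 -opprD subrr.
have [ml cl] := indep g0 hu e.
rewrite hm; move/eqP: ml; rewrite subr_eq0 => /eqP ->.
by move/eqP: cl; rewrite subr_eq0 => /eqP ->.
Qed.
End Propo.

Lemma mx_iso (K : fieldType) (m1 m2 : nat) (h : m1 = m2) :
  exists (M : 'M[K]_(m1,m2)) (N : 'M[K]_(m2,m1)), N *m M = 1%:M.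
Proof. by subst m2; exists 1%:M, 1%:M; rewrite mul1mx. Qed.

Lemma iso_exists (K : fieldType) (V W : vectType K) : \dim {:V} = \dim {:W} ->
  exists (i : 'Hom(V,W)) (j : W -> V), forall w, i (j w) = w.
Proof.
move=> h; have [M [N NM]] := mx_iso K h.
pose eV := vbasis (fullv : {vspace V}); pose eW := vbasis (fullv : {vspace W}).
exists (passmx.hommx eV eW M), (fun w => passmx.vecof eV (passmx.rVof eW w *m N)).
have eVb : basis_of fullv eV := vbasisP _.
have eWb : basis_of fullv eW := vbasisP _.
move=> w; rewrite passmx.hommxE.
have e := passmx.vecofK eVb (passmx.rVof eW w *m N).
transitivity (passmx.vecof eW (passmx.rVof eW w *m N *m M)).
  by congr (passmx.vecof eW (_ *m M)).
rewrite -mulmxA NM mulmx1 (passmx.rVofK eWb) //. all: exact: vbasisP.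
Qed.

Theorem theorem8p6 (K : fieldType) (n : nat) (E1 E2 : vectType K)
  (h1 : \dim {: E1} = n) (h2 : \dim {: E2} = n) :
  exists f : {vspace tensorV E1 E2} -> ({vspace E1} * {vspace E2} -> Prop),
    (forall U, \dim U = 1%N ->
       multimap_atom (@subspace_le K E1) (@subspace_le K E2) (f U)) /\
    (forall U V, \dim U = 1%N -> \dim V = 1%N -> f U = f V -> U = V).
Proof.
have hd : \dim {:E1} = \dim {:'Hom(E1, K^o)}.
  by rewrite !dimvf /dim /= muln1.
have [i [j ij]] := iso_exists hd.
pose gof (t : 'Hom('Hom(E1, K^o), E2)) : 'Hom(E1,E2) := (t \o i)%VF.
have gofE t u : gof t u = t (i u) by rewrite comp_lfunE.
have gof0 t : t != 0 -> gof t != 0.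
  move=> t0; apply/eqP => h; move/eqP: t0; apply; apply/lfunP => a.
  by have := gofE t (j a); rewrite h ij !zero_lfunE => ->.
exists (fun U => Rg (gof (vpick U))).
split.
- move=> U dU.
  have t0 : vpick U != 0 by rewrite vpick0 -dimv_eq0 dU.
  have gS := Rg_Sigma (gof0 _ t0).
  set X := Rg _.
  have tX : tensor_elt (@subspace_le K E1) (op_rel (@subspace_le K E2)) X.
    exists (fun R => R = X); split; first by move=> R ->; left.
    apply: functional_extensionality => x; apply: propositional_extensionality.
    split; last by move=> [_ h]; apply: h.
    by move=> Xx; split; [exact: (Rg_sub Xx) | move=> R ->; exact: Xx].
  have tS : tensor_elt (@subspace_le K E1) (op_rel (@subspace_le K E2))
              (SigmaProd (@subspace_le K E1) (op_rel (@subspace_le K E2))).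
    exists (fun _ => False); split => //.
    apply: functional_extensionality => x; apply: propositional_extensionality.
    by split => [h|[h _]] //; split.
  have tsub y : tensor_elt (@subspace_le K E1) (op_rel (@subspace_le K E2)) y ->
      Defs.subsetP y (SigmaProd (@subspace_le K E1) (op_rel (@subspace_le K E2))).
    by move=> [om [_ ->]] x [].
  split => //; split.
  + move=> /(_ _ tS) hS; apply: (Rg_ne (gof0 _ t0)).
    apply: functional_extensionality => x; apply: propositional_extensionality.
    by split; [exact: Rg_sub | exact: hS].
  + move=> x tx Xx nxX y ty; rewrite /op_rel.
    suff hs : Defs.subsetP (SigmaProd (@subspace_le K E1) (op_rel (@subspace_le K E2))) x.
      by move=> z yz; apply: hs; exact: (tsub y ty z yz).
    have [z0 [xz0 nz0]] : exists z, x z /\ ~ X z.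
      apply: NNPP => hn; apply: nxX => z xz; apply: NNPP => nXz; apply: hn; by exists z.
    case: tx => om [omH xE]; rewrite /op_rel xE in Xx xz0 *.
    move=> z sz; split => // R omR.
    case: (omH R omR) => [hR|->] //.
    exfalso; apply: (key hR _ (proj2 xz0 R omR) nz0).
    by move=> w Xw; have [_ h] := Xx w Xw; exact: h R omR.
- move=> U V dU dV E.
  have t0 : vpick U != 0 by rewrite vpick0 -dimv_eq0 dU.
  have t0' : vpick V != 0 by rewrite vpick0 -dimv_eq0 dV.
  have [c hc] := prop (gof0 _ t0) (prop_line E).
  have tVE : vpick V = c *: vpick U.
    apply/lfunP => a; rewrite scale_lfunE.
    by have := hc (j a); rewrite !gofE ij.
  have lineV : <[vpick V]>%VS = V.
    apply/eqP; rewrite eqEdim; apply/andP; split; first exact: memv_pick.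
    by rewrite dim_vline t0' dV.
  rewrite -lineV; apply/eqP; rewrite eq_sym eqEdim; apply/andP; split; last first.
    by rewrite dim_vline t0' dU.
  have : vpick V \in U by rewrite tVE memvZ // memv_pick.
  exact.
Qed.
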